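(* Let $n\ge 2$, let $\Omega$ be a compact subset of $\mathbb{R}^n$, and for $\delta>0$ let $\Omega_\delta=\{x+\delta u : x\in\Omega,\ u\in B^n\}=\bigcup_{x\in\Omega}B_\delta(x)$. Then $\mathit{Uf}(\Omega_\delta)\subset \mathit{Uf}(\Omega)$ for every $\delta>0$. Moreover, if $\Omega$ is convex, then $\mathit{Uf}(\Omega_\delta)=\mathit{Uf}(\Omega)$ for every $\delta>0$.
   Context: $B^n$ is the closed unit ball in $\mathbb{R}^n$ and $B_\delta(x)$ the closed ball with center $x$ and radius $\delta$; $S^{n-1}$ is the unit sphere. For $X\subset\mathbb{R}^n$, $v\in S^{n-1}$ and $b\in\mathbb{R}$, put $X^+_{v,b}=X\cap\{x\in\mathbb{R}^n : x\cdot v>b\}$, and let $\mathrm{R}_{v,b}$ be the reflection of $\mathbb{R}^n$ in the hyperplane $\{x : x\cdot v=b\}$. For a bounded $X\subset\mathbb{R}^n$, define $l_X(v)=\inf\{a : \mathrm{R}_{v,c}(X^+_{v,c})\subset X \text{ for every } c\ge a\}$ and the minimal unfolded region $\mathit{Uf}(X)=\bigcap_{v\in S^{n-1}}\{x\in\mathbb{R}^n : x\cdot v\le l_X(v)\}$. *)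

(* Defs.v *)
From HB Require Import structures.
From mathcomp Require Import all_boot all_order all_algebra.
From mathcomp Require Import all_classical all_reals all_analysis.
Import numFieldTopology.Exports numFieldNormedType.Exports.
Set Implicit Arguments. Unset Strict Implicit. Unset Printing Implicit Defensive.
Import Order.TTheory GRing.Theory Num.Theory.
Local Open Scope classical_set_scope.
Local Open Scope ring_scope.

Section Unfold.
Variables (R : realType) (n : nat).
Implicit Types (x y u v : 'rV[R]_n) (X : set 'rV[R]_n) (b : R).

Definition dotv x y : R := \sum_(i < n) x ord0 i * y ord0 i.

Definition unit_sphere : set 'rV[R]_n := [set v | dotv v v = 1].

Definition unit_ball : set 'rV[R]_n := [set u | dotv u u <= 1].

Definition cap_plus X v b : set 'rV[R]_n := [set x | X x /\ dotv x v > b].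

(* reflection in the hyperplane {x | x.v = b} (v a unit vector) *)
Definition refl v b x : 'rV[R]_n := x - (2 * (dotv x v - b)) *: v.

(* l_X(v) = inf {a | forall c >= a, R_{v,c}(X^+_{v,c}) \subset X},
   taken in the extended reals (it is -oo iff X is empty) *)
Definition lX X v : \bar R :=
  ereal_inf [set a%:E | a in
    [set a : R | forall c, a <= c -> refl v c @` cap_plus X v c `<=` X]].

Definition Uf X : set 'rV[R]_n :=
  [set x | forall v, unit_sphere v -> ((dotv x v)%:E <= lX X v)%E].

Definition thicken X (delta : R) : set 'rV[R]_n :=
  [set y | exists2 x, X x & exists2 u, unit_ball u & y = x + delta *: u].

Definition convexR X : Prop :=
  forall x y (t : R), X x -> X y -> 0 <= t -> t <= 1 -> X ((1 - t) *: x + t *: y).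

End Unfold.

(* Main.v *)
Require Import Defs.
From HB Require Import structures.
From mathcomp Require Import all_boot all_order all_algebra.
From mathcomp Require Import all_classical all_reals all_analysis.
From mathcomp Require Import ring lra.
Import numFieldTopology.Exports numFieldNormedType.Exports.
Import Order.TTheory GRing.Theory Num.Theory.
Local Open Scope classical_set_scope.
Local Open Scope ring_scope.

Section Aux.
Context {R : realType} {n : nat}.
Implicit Types (x y z u v w : 'rV[R]_n) (a b c : R).

Lemma dotvC x y : dotv x y = dotv y x.
Proof. by apply: eq_bigr => i _; rewrite mulrC. Qed.
Lemma dotvDl x y z : dotv (x + y) z = dotv x z + dotv y z.
Proof. by rewrite /dotv -big_split; apply: eq_bigr => i _; rewrite mxE mulrDl. Qed.
Lemma dotvZl a x y : dotv (a *: x) y = a * dotv x y.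
Proof. by rewrite /dotv mulr_sumr; apply: eq_bigr => i _; rewrite mxE mulrA. Qed.
Lemma dotvNl x y : dotv (- x) y = - dotv x y.
Proof. by rewrite -scaleN1r dotvZl mulN1r. Qed.
Lemma dotvBl x y z : dotv (x - y) z = dotv x z - dotv y z.
Proof. by rewrite dotvDl dotvNl. Qed.
Lemma dotvDr x y z : dotv z (x + y) = dotv z x + dotv z y.
Proof. by rewrite !(dotvC z) dotvDl. Qed.
Lemma dotvZr a x y : dotv y (a *: x) = a * dotv y x.
Proof. by rewrite !(dotvC y) dotvZl. Qed.
Lemma dotvNr x y : dotv y (- x) = - dotv y x.
Proof. by rewrite !(dotvC y) dotvNl. Qed.
Lemma dotvBr x y z : dotv z (x - y) = dotv z x - dotv z y.
Proof. by rewrite dotvDr dotvNr. Qed.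
Definition dotvE := (dotvDl, dotvDr, dotvBl, dotvBr, dotvZl, dotvZr, dotvNl, dotvNr).

Lemma dotv_ge0 x : 0 <= dotv x x.
Proof. by apply: sumr_ge0 => i _; rewrite -expr2 sqr_ge0. Qed.

Lemma dotv_eq0 x : dotv x x = 0 -> x = 0.
Proof.
move=> /eqP; rewrite psumr_eq0; last by move=> i _; rewrite -expr2 sqr_ge0.
move=> /allP H; apply/rowP => i; rewrite mxE.
by have := H i (mem_index_enum _); rewrite mulf_eq0 orbb => /eqP.
Qed.

Lemma dotv_cs x w : dotv w w = 1 -> dotv x w ^+ 2 <= dotv x x.
Proof.
move=> ww; have := dotv_ge0 (x - dotv x w *: w).
rewrite !dotvE ww (dotvC w x); lra.
Qed.

Lemma dotv_cont p : continuous (fun z : 'rV[R]_n => dotv (p - z) (p - z)).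
Proof.
rewrite /dotv.
apply: (@continuous_big _ _ +%R 0 xpredT) => [|i _ z].
  by move=> [x1 x2]; apply: add_continuous.
 have h : {for z, continuous (fun z : 'rV[R]_n => (p - z) ord0 i)}.
  apply: (@continuous_comp _ _ _ (fun z : 'rV[R]_n => p - z) (fun M : 'rV[R]_n => M ord0 i)).
    by apply: continuousB; [exact: cst_continuous|by move=> ?].
  exact: coord_continuous.
exact: continuousM.
Qed.
End Aux.
Section Steps.
Context {R : realType} {n : nat}.
Implicit Types (x y z u v w : 'rV[R]_n) (a b c : R) (X : set 'rV[R]_n).

Lemma step1 X v c (d : R) : 0 < d -> dotv v v = 1 ->
  refl v c @` cap_plus X v c `<=` X ->
  refl v c @` cap_plus (thicken X d) v c `<=` thicken X d.
Proof.
move=> d0 vv H _ [y [[x Xx [u Bu ->]] yv] <-].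
rewrite /unit_ball /= in Bu.
have [xv|xv] := ltrP c (dotv x v).
  exists (refl v c x); first by apply: H; exists x.
  exists (u - (2 * dotv u v) *: v).
    rewrite /unit_ball /= !dotvE vv (dotvC v u); lra.
  by apply/rowP => i; rewrite /refl !dotvE !mxE; ring.
exists x => //.
pose w := refl v c (x + d *: u) - x.
exists (d^-1 *: w); last by apply/rowP => i; rewrite !mxE; field; rewrite gt_eqF.
rewrite /unit_ball /= dotvZl dotvZr.
have hw : dotv w w <= d ^+ 2 * dotv u u.
  rewrite /w /refl !dotvE vv (dotvC v u) (dotvC v x).
  rewrite /cap_plus /= !dotvE in yv.
  set s := dotv x v + d * dotv u v - c.
  have s0 : 0 < s by rewrite /s; lra.
  have : 0 <= s * (c - dotv x v) by apply: mulr_ge0; lra.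
  rewrite /s. nra.
have di : 0 < d^-1 by rewrite invr_gt0.
clearbody w; rewrite mulrA.
have -> : d^-1 / d * dotv w w = dotv w w / d ^+ 2 by field; rewrite gt_eqF.
rewrite ler_pdivrMr ?exprn_gt0 //; nra.
Qed.
End Steps.
Section Steps2.
Context {R : realType} {n : nat}.
Implicit Types (x y z u v w : 'rV[R]_n) (a b c : R) (X : set 'rV[R]_n).

Lemma dotv_sqB x y t : dotv (x - t *: y) (x - t *: y) =
  dotv x x - 2 * t * dotv y x + t ^+ 2 * dotv y y.
Proof. rewrite !dotvE (dotvC x y); ring. Qed.

Lemma step2 X v c (d : R) : 0 < d -> dotv v v = 1 -> convexR X -> compact X ->
  refl v c @` cap_plus (thicken X d) v c `<=` thicken X d ->
  refl v c @` cap_plus X v c `<=` X.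
Proof.
move=> d0 vv cvx cpt H _ [x [Xx xv] <-].
set p := refl v c x.
have [//|Np] := pselect (X p).
have [q Xq qmin] := @compact_EVT_min _ _ (fun z => dotv (p - z) (p - z)) X
  (ex_intro _ x Xx) cpt (continuous_subspaceT (dotv_cont p)).
rewrite inE in Xq.
have var : forall z, X z -> dotv (z - q) (p - q) <= 0.
  move=> z Xz; rewrite leNgt; apply/negP => a0.
  have b0 := dotv_ge0 (z - q).
  move: a0 b0; set a := dotv (z - q) (p - q); set b := dotv (z - q) (z - q) => a0 b0.
  pose t := a / (a + b).
  have ab0 : 0 < a + b by lra.
  have t0 : 0 < t by rewrite divr_gt0.
  have t1 : t <= 1 by rewrite ler_pdivrMr //; lra.
  have ht : t * (a + b) = a by rewrite /t; field; rewrite gt_eqF.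
  have := qmin ((1 - t) *: q + t *: z) (mem_set (cvx _ _ _ Xq Xz (ltW t0) t1)).
  have -> : p - ((1 - t) *: q + t *: z) = (p - q) - t *: (z - q).
    by apply/rowP => i; rewrite !mxE; ring.
  rewrite dotv_sqB -/a -/b => h.
  have ta : 0 < t * a by rewrite mulr_gt0.
  have e : t ^+ 2 * b = t * a - t ^+ 2 * a.
    have h2 : t * (t * (a + b)) = t * a by rewrite ht.
    rewrite expr2; nra.
  nra.
have pq : p != q by apply/negP => /eqP pq; apply: Np; rewrite pq.
pose w' := p - q.
pose d' := dotv w' w'.
have d'0 : 0 < d'.
  rewrite lt_neqAle dotv_ge0 andbT eq_sym; apply/negP => /eqP /dotv_eq0 /eqP.
  by rewrite subr_eq0 (negbTE pq).
have wv : dotv w' v <= 0.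
  rewrite leNgt; apply/negP => h.
  have hx := var x Xx.
  have e1 : w' = (x - q) - (2 * (dotv x v - c)) *: v.
    by rewrite /w' /p /refl; apply/rowP => i; rewrite !mxE; ring.
  have e : d' = dotv (x - q) w' - 2 * (dotv x v - c) * dotv v w'.
    by rewrite /d' {1}e1 dotvBl dotvZl.
  rewrite (dotvC v w') in e.
  have : 0 < (dotv x v - c) * dotv w' v by rewrite mulr_gt0 // subr_gt0.
  rewrite -/w' in hx; nra.
pose s := Num.sqrt d'.
have s0 : 0 < s by rewrite sqrtr_gt0.
have ss : s ^+ 2 = d' by rewrite sqr_sqrtr // ltW.
pose w := s^-1 *: w'.
have ww : dotv w w = 1.
  by rewrite dotvZl dotvZr -/d' -ss; field; rewrite gt_eqF.
have wv2 : dotv w v <= 0.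
  by rewrite dotvZl mulr_ge0_le0 // invr_ge0 ltW.
have w'w : dotv w' w = s.
  by rewrite dotvZr -/d' -ss; field; rewrite gt_eqF.
have omw : forall om, X om -> dotv (om - q) w <= 0.
  move=> om Xom; rewrite dotvZr mulr_ge0_le0 //; first by rewrite invr_ge0 ltW.
  exact: var.
clearbody w.
pose u := w - (2 * dotv w v) *: v.
have Hy : cap_plus (thicken X d) v c (x + d *: u).
  split.
    exists x => //; exists u => //.
    rewrite /unit_ball /= /u !dotvE vv (dotvC v w); lra.
  rewrite /u !dotvE vv; nra.
have [om Xom [u2 Bu2 e2]] := H _ (imageP _ Hy).
have ry : refl v c (x + d *: u) = p + d *: w.
  apply/rowP => i; rewrite /p /refl /u !dotvE vv !mxE; ring.
rewrite ry in e2.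
have ea : (p - q) + d *: w - (om - q) = d *: u2.
  transitivity ((p + d *: w) - om); first by apply/rowP => i; rewrite !mxE; ring.
  by rewrite e2; apply/rowP => i; rewrite !mxE; ring.
have h1 : dotv ((p - q) + d *: w - (om - q)) w >= s + d.
  rewrite dotvBl dotvDl dotvZl ww [dotv (p - q) w]w'w.
  have := omw om Xom; lra.
have := dotv_cs ((p - q) + d *: w - (om - q)) w ww.
rewrite ea dotvZl dotvZr.
rewrite /unit_ball /= in Bu2.
move: h1; rewrite ea => h1.
have hb : d * d * dotv u2 u2 <= d * d by rewrite ler_piMr // mulr_ge0 // ltW.
rewrite dotvZl in h1.
move: h1; set k := d * dotv u2 w => h1.
have hk : d < k by lra.
have : d * d < k ^+ 2 by rewrite expr2; apply: ltr_pM => //; lra.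
move=> h3; rewrite dotvZl => h4; exfalso; lra.
Qed.
End Steps2.

Lemma lX_le {R : realType} {n : nat} (X Y : set 'rV[R]_n) v :
  (forall c, refl v c @` cap_plus X v c `<=` X -> refl v c @` cap_plus Y v c `<=` Y) ->
  (lX Y v <= lX X v)%E.
Proof.
move=> h; apply: le_ereal_inf => _ [a Ha <-]; exists a => //= c ac.
exact: h (Ha c ac).
Qed.

Theorem theorem3p1 (R : realType) (n : nat) (Omega : set 'rV[R]_n) :
  (2 <= n)%N -> compact Omega ->
  (forall delta : R, 0 < delta -> Uf (thicken Omega delta) `<=` Uf Omega) /\
  (convexR Omega ->
     forall delta : R, 0 < delta -> Uf (thicken Omega delta) = Uf Omega).
Proof.
move=> n2 cpt.
have P1 : forall delta : R, 0 < delta -> Uf (thicken Omega delta) `<=` Uf Omega.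
  move=> d d0 x Ux v vs; apply: (le_trans (Ux v vs)); apply: lX_le => c.
  exact: step1.
split => // cvx d d0; apply/seteqP; split; first exact: P1.
move=> x Ux v vs; apply: (le_trans (Ux v vs)); apply: lX_le => c.
exact: step2.
Qed.
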